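(* For every word $\omega\in[n]^*$, $M_\omega B_\omega\subseteq\{x\in\mathbb{Z}^n: 0\le x\le u_\omega\}$ (coordinatewise), and $M_\omega B_\omega=u_\omega-M_\omega B_\omega$.
   Context: Let $[n]=\{1,\dots,n\}$, $e_1,\dots,e_n$ the standard basis of $\mathbb{Z}^n$; $\varepsilon$ is the empty word, $*$ concatenation. For words $\omega$ over $[n]$ define recursively $\delta^i_\omega\in\mathbb{Z}^n$: $\delta^i_\varepsilon=e_i$; $\delta^j_{\omega*j}=\delta^j_\omega$, $\delta^i_{\omega*j}=\delta^i_\omega-\delta^j_\omega$ for $i\ne j$. Let $B_\varepsilon=\{0\}$, $B_{\omega*j}=B_\omega+\{0,\delta^j_\omega\}$ (Minkowski sum). Let $M_\omega=(\delta^1_\omega\ \cdots\ \delta^n_\omega)^{-1}$ (inverse of the matrix with columns $\delta^i_\omega$). For $k\in[n]$ let $D^k=\mathrm{id}+e_k(\mathbb{1}-e_k)^T$ with $\mathbb{1}=(1,\dots,1)^T$. Define $u_\varepsilon=0$, $u_{\omega*j}=e_j+D^j u_\omega$. *)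

(* Defs.v *)
(* Vectors in Z^n are column vectors 'cV[int]_n; words over [n]
   are sequences of 'I_n (letters 0..n-1 stand for 1..n). *)
From HB Require Import structures.
From mathcomp Require Import all_boot all_order all_algebra.
Set Implicit Arguments. Unset Strict Implicit. Unset Printing Implicit Defensive.
Import Order.TTheory GRing.Theory Num.Theory.
Local Open Scope ring_scope.

Section Defs.
Variable n : nat.

Definition evec (i : 'I_n) : 'cV[int]_n := delta_mx i 0.

(* Recursion on the REVERSED word: (j :: r) corresponds to  rev r * j. *)
Fixpoint deltar (r : seq 'I_n) : 'I_n -> 'cV[int]_n :=
  match r with
  | [::] => evec
  | j :: r' => fun i => if i == j then deltar r' j else deltar r' i - deltar r' j
  end.

Definition delta (w : seq 'I_n) (i : 'I_n) : 'cV[int]_n := deltar (rev w) i.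

(* B_omega, as a list of vectors (a finite set, membership semantics) *)
Fixpoint Br (r : seq 'I_n) : seq 'cV[int]_n :=
  match r with
  | [::] => [:: 0]
  | j :: r' => Br r' ++ [seq b + deltar r' j | b <- Br r']
  end.

Definition B (w : seq 'I_n) : seq 'cV[int]_n := Br (rev w).

Definition Dmx (k : 'I_n) : 'M[int]_n :=
  1%:M + evec k *m (const_mx 1 - evec k)^T.

Fixpoint ur (r : seq 'I_n) : 'cV[int]_n :=
  match r with
  | [::] => 0
  | j :: r' => evec j + Dmx j *m ur r'
  end.

Definition u (w : seq 'I_n) : 'cV[int]_n := ur (rev w).

Definition deltaMx (w : seq 'I_n) : 'M[int]_n := \matrix_(a, b) delta w b a 0.

Definition Mmx (w : seq 'I_n) : 'M[rat]_n := invmx (map_mx intr (deltaMx w)).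

Definition Mapp (w : seq 'I_n) (b : 'cV[int]_n) : 'cV[rat]_n :=
  Mmx w *m map_mx intr b.

End Defs.

(* Main.v *)
Require Import Defs.
From HB Require Import structures.
From mathcomp Require Import all_boot all_order all_algebra.
Import Order.TTheory GRing.Theory Num.Theory.
Local Open Scope ring_scope.

Section Aux.
Variable n : nat.

Fixpoint Mr (r : seq 'I_n) : 'M[int]_n :=
  match r with
  | [::] => 1%:M
  | j :: r' => Dmx j *m Mr r'
  end.

Lemma evecE (i k : 'I_n) : evec i k 0 = (k == i)%:R.
Proof. by rewrite /evec mxE eqxx andbT. Qed.

Lemma DmxE (j : 'I_n) (y : 'cV[int]_n) k :
  (Dmx j *m y) k 0 = if k == j then \sum_l y l 0 else y k 0.
Proof.
rewrite /Dmx mulmxDl mul1mx -mulmxA mxE [X in _ + X]mxE big_ord1 evecE.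
rewrite mxE.
have -> : \sum_l (const_mx 1 - evec j)^T 0 l * y l 0
          = \sum_l y l 0 - y j 0.
  rewrite (bigD1 j) //= [X in _ = X - _](bigD1 j) //= !mxE eqxx andbT subrr mul0r add0r.
  rewrite addrAC subrr add0r; apply: eq_bigr => l /negbTE hl.
  by rewrite !mxE hl /= subr0 mul1r.
case: eqP => [->|_]; last by rewrite mul0r addr0.
by rewrite mul1r addrC subrK.
Qed.

Lemma D_evec (j : 'I_n) : Dmx j *m evec j = evec j.
Proof.
apply/matrixP => k l; rewrite ord1 DmxE evecE.
case: (k =P j) => [_|_] //=; rewrite (bigD1 j) //= evecE eqxx big1 ?addr0 //.
by move=> i /negbTE hi; rewrite evecE hi.
Qed.

Lemma D_evec2 (i j : 'I_n) : i != j -> Dmx j *m (evec i - evec j) = evec i.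
Proof.
move=> hij; apply/matrixP => k l; rewrite [l]ord1 DmxE.
have -> : \sum_l0 (evec i - evec j) l0 0 = 0.
  under eq_bigr do rewrite !mxE !eqxx !andbT.
  rewrite sumrB (bigD1 i) //= [X in _ - X](bigD1 j) //= !eqxx !big1 ?addr0 ?subrr //.
    by move=> l0 /negbTE ->.
  by move=> l0 /negbTE ->.
case: (k =P j) => [->|/eqP h]; first by rewrite evecE eq_sym (negbTE hij).
by rewrite !mxE !eqxx !andbT (negbTE h) subr0.
Qed.

Lemma Mr_delta r (i : 'I_n) : Mr r *m deltar r i = evec i.
Proof.
elim: r i => [|j r IH] i /=; first by rewrite mul1mx.
rewrite -mulmxA; case: eqP => [->|/eqP hij].
  by rewrite IH D_evec.
by rewrite mulmxBr !IH D_evec2.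
Qed.

Definition deltaMxr (r : seq 'I_n) : 'M[int]_n := \matrix_(a, b) deltar r b a 0.

Lemma Mr_deltaMx r : Mr r *m deltaMxr r = 1%:M.
Proof.
apply/matrixP => a b; have := congr1 (fun v : 'cV[int]_n => v a 0) (Mr_delta r b).
rewrite /= evecE !mxE => <-; apply: eq_bigr => k _; by rewrite mxE.
Qed.

Lemma MappE (w : seq 'I_n) b : Mapp w b = map_mx intr (Mr (rev w) *m b).
Proof.
rewrite /Mapp /Mmx map_mxM.
have H : map_mx (intr : int -> rat) (Mr (rev w)) *m map_mx intr (deltaMx w) = 1%:M.
  by rewrite -map_mxM (Mr_deltaMx (rev w)) map_mx1.
have [_ U] := mulmx1_unit H.
congr (_ *m _).
by rewrite -[invmx _]mul1mx -H -mulmxA mulmxV // mulmx1.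
Qed.

Lemma bounds r b : b \in Br r ->
  forall i, 0 <= (Mr r *m b) i 0 <= ur r i 0.
Proof.
elim: r b => [|j r IH] b /=.
  by rewrite inE => /eqP -> i; rewrite mulmx0 mxE lexx.
have key : forall y : 'cV[int]_n, (forall i, 0 <= y i 0 <= ur r i 0) ->
   forall (c : int) i, 0 <= c <= 1 ->
   0 <= (Dmx j *m y) i 0 + c * evec j i 0 <= (evec j + Dmx j *m ur r) i 0.
  move=> y hy c i /andP [c0 c1]; rewrite [(evec j + _) i 0]mxE !DmxE evecE.
  case: eqP => _.
    rewrite mulr1 addrC; apply/andP; split.
      by apply: addr_ge0 => //; apply: sumr_ge0 => l _; case/andP: (hy l).
    by apply: lerD => //; apply: ler_sum => l _; case/andP: (hy l).
  by rewrite mulr0 addr0 add0r; apply: hy.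
rewrite mem_cat => /orP [hb|/mapP [c hc ->]] i.
  have := key _ (IH b hb) 0 i; rewrite mul0r addr0 -mulmxA; apply.
  by rewrite lexx ler01.
have := key _ (IH c hc) 1 i; rewrite mul1r -mulmxA mulmxDr mulmxA Mr_delta.
move=> h; rewrite mulmxDr D_evec mxE mulmxA; apply: h; by rewrite ler01 lexx.
Qed.

Lemma sym r b : b \in Br r -> exists2 b', b' \in Br r & Mr r *m b' = ur r - Mr r *m b.
Proof.
elim: r b => [|j r IH] b /=.
  by rewrite inE => /eqP ->; exists 0; rewrite ?inE // mulmx0 subr0.
rewrite mem_cat => /orP [hb|/mapP [c hc ->]].
  have [b' hb' E] := IH b hb.
  exists (b' + deltar r j).
    by rewrite mem_cat; apply/orP; right; apply/mapP; exists b'.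
  rewrite -!mulmxA !mulmxDr Mr_delta D_evec E mulmxBr.
  by rewrite addrC addrA.
have [c' hc' E] := IH c hc.
exists c'; first by rewrite mem_cat hc'.
rewrite -!mulmxA E mulmxBr mulmxDr Mr_delta mulmxDr D_evec.
by rewrite opprD addrA (addrC (evec j)) [_ + evec j - _]addrAC addrK.
Qed.

End Aux.

Theorem corollary3p3 (n : nat) (w : seq 'I_n) :
  (forall b, b \in B w ->
     exists x : 'cV[int]_n,
       Mapp w b = map_mx intr x /\
       (forall i : 'I_n, 0 <= x i 0 <= u w i 0))
  /\
  (forall y : 'cV[rat]_n,
     (exists2 b, b \in B w & y = Mapp w b) <->
     (exists2 b, b \in B w & y = map_mx intr (u w) - Mapp w b)).
Proof.
split.
  move=> b hb; exists (@Mr _ (rev w) *m b); split; first exact: MappE.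
  exact: bounds.
move=> y; split => [[b hb ->]|[b hb ->]]; have [b' hb' E] := sym _ _ _ hb.
  exists b' => //; rewrite !MappE E raddfB /=.
  by rewrite opprB addrC subrK.
by exists b' => //; rewrite !MappE E raddfB.
Qed.
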